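(* (i) Let $(A,\succ,\prec)$ be an anti-pre-Novikov algebra and $s\in A\otimes A$ define a factorizable anti-pre-Novikov bialgebra $(A,\succ,\prec,\Delta_{\succ,s},\Delta_{\prec,s})$, and let $\lambda\in k$ be nonzero. Define $\omega(x,y)=-\lambda\langle T_{s+\tau(s)}^{-1}(x),y\rangle$ for $x,y\in A$ and $P=T_s\omega^\sharp$. Then $(A,\succ,\prec,P,\omega)$ is a quadratic Rota–Baxter anti-pre-Novikov algebra of weight $\lambda$. (ii) Conversely, let $(A,\succ,\prec,P,\omega)$ be a quadratic Rota–Baxter anti-pre-Novikov algebra of weight $\lambda\neq0$, and let $s\in A\otimes A$ be defined by $T_s=P(\omega^\sharp)^{-1}$. Then $(A,\succ,\prec,\Delta_{\succ,s},\Delta_{\prec,s})$ is a factorizable anti-pre-Novikov bialgebra.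
   Context: $A$ is finite-dimensional over a field $k$. An anti-pre-Novikov algebra is $(A,\succ,\prec)$ such that with $x\circ y=x\succ y+x\prec y$: $(x\circ y-y\circ x)\succ z=y\succ(x\succ z)-x\succ(y\succ z)$; $x\prec(y\circ z)=(y\succ x)\prec z-(x\prec y)\prec z-y\succ(x\prec z)$; $(x\circ y)\succ z=-(x\succ z)\prec y$; $(x\prec y)\prec z=(x\prec z)\prec y$; $(x\circ y-y\circ x)\prec z=x\succ(y\circ z)-y\succ(x\circ z)$. Notation: $x\odot y=x\succ y+y\prec x$; $L_\ast(x)y=x\ast y$, $R_\ast(x)y=y\ast x$; $L_{\star}=L_{\circ}+R_{\circ}$, $L_{\odot}=L_{\succ}+R_{\prec}$; $\tau$ is the flip; $T_r:A^*\to A$, $\langle T_r(\zeta),\eta\rangle=\langle r,\zeta\otimes\eta\rangle$; $\omega^\sharp:A\to A^*$, $\langle\omega^\sharp(x),y\rangle=\omega(x,y)$. $r\in A\otimes A$ is invariant if $(I\otimes L_{\star}(x)-L_{\succ}(x)\otimes I)r=0$ and $(L_{\circ}(x)\otimes I-I\otimes L_{\odot}(x))r=0$ for all $x$. For $s=\sum_i a_i\otimes b_i$, the anti-pre-Novikov Yang–Baxter equation (APN-YBE) is $\sum_{i,j}a_i\circ a_j\otimes b_i\otimes b_j+\sum_{i,j}a_j\otimes a_i\otimes(b_i\odot b_j)+\sum_{i,j}a_i\otimes(b_i\prec a_j)\otimes b_j=0$. Given $s$, set $\Delta_{\succ,s}(x)=(I\otimes L_{\star}(x)-L_{\succ}(x)\otimes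 I)s$ and $\Delta_{\prec,s}(x)=(L_{\circ}(x)\otimes I-I\otimes L_{\odot}(x))s$. If $s$ solves the APN-YBE and $s+\tau(s)$ is invariant, $(A,\succ,\prec,\Delta_{\succ,s},\Delta_{\prec,s})$ is called a quasi-triangular anti-pre-Novikov bialgebra (the paper shows it is always an anti-pre-Novikov bialgebra); it is called factorizable if in addition $T_{s+\tau(s)}:A^*\to A$ is a linear isomorphism. A Rota–Baxter operator of weight $\lambda$ on $(A,\succ,\prec)$ is a linear $P$ with $P(x)\prec P(y)=P(P(x)\prec y+x\prec P(y)+\lambda x\prec y)$ and $P(x)\succ P(y)=P(P(x)\succ y+x\succ P(y)+\lambda x\succ y)$. A quadratic Rota–Baxter anti-pre-Novikov algebra of weight $\lambda$ is $(A,\succ,\prec,P,\omega)$ with $P$ Rota–Baxter of weight $\lambda$, $\omega$ non-degenerate symmetric with $\omega(x\prec y,z)=-\omega(x,z\circ y)$, $\omega(x\succ y,z)=\omega(x\circ z+z\circ x,y)$, and $\omega(P(x),y)+\omega(x,P(y))+\lambda\omega(x,y)=0$. *)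

(* Defs.v *)
(* A finite-dimensional k-vector space A is modelled in
   coordinates as A = k^n = 'rV[K]_n; the dual A^* is also 'rV[K]_n with the
   pairing <zeta, y> = sum_i zeta_i y_i; A (x) A is 'M[K]_n (entry (i,j) is the
   coefficient of e_i (x) e_j); A (x) A (x) A is {ffun 'I_n * 'I_n * 'I_n -> K}. *)
From HB Require Import structures.
From mathcomp Require Import all_boot all_order all_algebra.
Set Implicit Arguments. Unset Strict Implicit. Unset Printing Implicit Defensive.
Import GRing.Theory.
Local Open Scope ring_scope.

Section APN.
Variables (K : fieldType) (n : nat).
Local Notation A := 'rV[K]_n.

Definition ebas (i : 'I_n) : A := delta_mx 0 i.

Definition dpair (zeta y : A) : K := \sum_(i < n) zeta 0 i * y 0 i.

Definition tensor2 (x y : A) : 'M[K]_n := \matrix_(i, j) (x 0 i * y 0 j).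
Definition tensor3 (x y z : A) : {ffun 'I_n * 'I_n * 'I_n -> K} :=
  [ffun t => x 0 t.1.1 * y 0 t.1.2 * z 0 t.2].

(* canonical decomposition s = sum_p tl s p (x) tr p,  p = (i,j),
   tl s (i,j) = s_ij e_i,  tr (i,j) = e_j *)
Definition tl (s : 'M[K]_n) (p : 'I_n * 'I_n) : A := s p.1 p.2 *: ebas p.1.
Definition tr (p : 'I_n * 'I_n) : A := ebas p.2.

Definition tmap (f g : A -> A) (s : 'M[K]_n) : 'M[K]_n :=
  \sum_(p : 'I_n * 'I_n) tensor2 (f (tl s p)) (g (tr p)).

Definition tau (s : 'M[K]_n) : 'M[K]_n := s^T.

(* T_r : A^* -> A,  <T_r zeta, eta> = <r, zeta (x) eta> *)
Definition Tmap (r : 'M[K]_n) (zeta : A) : A := \row_j \sum_(i < n) r i j * zeta 0 i.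

Definition sharp (omega : A -> A -> K) (x : A) : A := \row_j omega x (ebas j).

Definition bilinear_prod (f : A -> A -> A) : Prop :=
  (forall (a : K) x y z, f (a *: x + y) z = a *: f x z + f y z) /\
  (forall (a : K) x y z, f z (a *: x + y) = a *: f z x + f z y).

Definition bilinear_form (f : A -> A -> K) : Prop :=
  (forall (a : K) x y z, f (a *: x + y) z = a * f x z + f y z) /\
  (forall (a : K) x y z, f z (a *: x + y) = a * f z x + f z y).

Definition linear_map (P : A -> A) : Prop :=
  forall (a : K) x y, P (a *: x + y) = a *: P x + P y.

Variables (succ prec : A -> A -> A).

Definition circ x y := succ x y + prec x y.
Definition odot x y := succ x y + prec y x.
Definition star x y := circ x y + circ y x.

Definition is_APN : Prop :=
  bilinear_prod succ /\ bilinear_prod prec /\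
  (forall x y z, succ (circ x y - circ y x) z = succ y (succ x z) - succ x (succ y z)) /\
  (forall x y z, prec x (circ y z) =
                 prec (succ y x) z - prec (prec x y) z - succ y (prec x z)) /\
  (forall x y z, succ (circ x y) z = - prec (succ x z) y) /\
  (forall x y z, prec (prec x y) z = prec (prec x z) y) /\
  (forall x y z, prec (circ x y - circ y x) z = succ x (circ y z) - succ y (circ x z)).

Definition APN_YBE (s : 'M[K]_n) : Prop :=
  \sum_(p : 'I_n * 'I_n) \sum_(q : 'I_n * 'I_n)
     (tensor3 (circ (tl s p) (tl s q)) (tr p) (tr q)
      + tensor3 (tl s q) (tl s p) (odot (tr p) (tr q))
      + tensor3 (tl s p) (prec (tr p) (tl s q)) (tr q)) = 0.

Definition invariant (r : 'M[K]_n) : Prop :=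
  forall x, tmap id (star x) r - tmap (succ x) id r = 0 /\
            tmap (circ x) id r - tmap id (odot x) r = 0.

Definition Delta_succ (s : 'M[K]_n) (x : A) := tmap id (star x) s - tmap (succ x) id s.
Definition Delta_prec (s : 'M[K]_n) (x : A) := tmap (circ x) id s - tmap id (odot x) s.

Definition factorizable (s : 'M[K]_n) : Prop :=
  APN_YBE s /\ invariant (s + tau s) /\ bijective (Tmap (s + tau s)).

Definition RB_operator (lam : K) (P : A -> A) : Prop :=
  linear_map P /\
  (forall x y, prec (P x) (P y) = P (prec (P x) y + prec x (P y) + lam *: prec x y)) /\
  (forall x y, succ (P x) (P y) = P (succ (P x) y + succ x (P y) + lam *: succ x y)).

Definition quadratic_RB_APN (lam : K) (P : A -> A) (omega : A -> A -> K) : Prop :=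
  is_APN /\ RB_operator lam P /\
  bilinear_form omega /\
  (forall x y, omega x y = omega y x) /\
  (forall x, (forall y, omega x y = 0) -> x = 0) /\
  (forall x y z, omega (prec x y) z = - omega x (circ z y)) /\
  (forall x y z, omega (succ x y) z = omega (circ x z + circ z x) y) /\
  (forall x y, omega (P x) y + omega x (P y) + lam * omega x y = 0).

End APN.

(* Main.v *)
Require Import Defs.
From HB Require Import structures.
From mathcomp Require Import all_boot all_order all_algebra.
From mathcomp Require Import ring.
Set Implicit Arguments. Unset Strict Implicit. Unset Printing Implicit Defensive.
Import GRing.Theory.
Local Open Scope ring_scope.

Section Basic.
Variables (K : fieldType) (n : nat).
Local Notation A := 'rV[K]_n.
Local Notation eb := (@ebas K n).

Section Lin.
Variable P : A -> A.
Hypothesis HP : linear_map P.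
Lemma lm0 : P 0 = 0.
Proof.
have h := HP 1 0 0; rewrite !scale1r addr0 in h.
by apply: (@addrI _ (P 0)); rewrite addr0 -h.
Qed.
Lemma lmD x y : P (x + y) = P x + P y.
Proof. by rewrite -[x in LHS]scale1r HP scale1r. Qed.
Lemma lmZ a x : P (a *: x) = a *: P x.
Proof. by rewrite -[_ *: x]addr0 HP lm0 addr0. Qed.
Lemma lmN x : P (- x) = - P x.
Proof. by rewrite -scaleN1r lmZ scaleN1r. Qed.
Lemma lmB x y : P (x - y) = P x - P y.
Proof. by rewrite lmD lmN. Qed.
Lemma lm_sum (I : finType) (F : I -> A) : P (\sum_i F i) = \sum_i P (F i).
Proof.
elim/big_rec2: _ => [|i y1 y2 _ <-]; first exact: lm0.
by rewrite lmD.
Qed.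
End Lin.

Section Form.
Variable f : A -> K.
Hypothesis Hf : forall (a : K) x y, f (a *: x + y) = a * f x + f y.
Lemma lf0 : f 0 = 0.
Proof.
have h := Hf 1 0 0; rewrite scale1r addr0 mul1r in h.
by apply: (@addrI _ (f 0)); rewrite addr0 -h.
Qed.
Lemma lfD x y : f (x + y) = f x + f y.
Proof. by rewrite -[x in LHS]scale1r Hf mul1r. Qed.
Lemma lfZ a x : f (a *: x) = a * f x.
Proof. by rewrite -[_ *: x]addr0 Hf lf0 addr0. Qed.
Lemma lfN x : f (- x) = - f x.
Proof. by rewrite -scaleN1r lfZ mulN1r. Qed.
Lemma lf_sum (I : finType) (F : I -> A) : f (\sum_i F i) = \sum_i f (F i).
Proof.
elim/big_rec2: _ => [|i y1 y2 _ <-]; first exact: lf0.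
by rewrite lfD.
Qed.
End Form.

Lemma dpairE (z y : A) : dpair z y = (y *m z^T) 0 0.
Proof. rewrite /dpair !mxE; apply: eq_bigr => i _; by rewrite !mxE mulrC. Qed.

Lemma dpair_lin (z : A) a x y : dpair z (a *: x + y) = a * dpair z x + dpair z y.
Proof. by rewrite !dpairE mulmxDl -scalemxAl !mxE. Qed.

Lemma dpair_linl (y : A) a x z : dpair (a *: x + z) y = a * dpair x y + dpair z y.
Proof. by rewrite !dpairE linearD linearZ /= mulmxDr -scalemxAr !mxE. Qed.

Lemma dpair_ebas (z : A) j : dpair z (eb j) = z 0 j.
Proof.
rewrite /dpair (bigD1 j) //= big1 => [|i /negbTE hi]; rewrite !mxE ?eqxx ?hi ?mulr1 ?addr0 //.
by rewrite andbF mulr0.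
Qed.

Lemma dpair_ebasl (z : A) j : dpair (eb j) z = z 0 j.
Proof.
rewrite /dpair (bigD1 j) //= big1 => [|i /negbTE hi]; rewrite !mxE ?eqxx ?hi ?mul1r ?addr0 //.
by rewrite andbF mul0r.
Qed.

Lemma dpair_inj (u v : A) : (forall z, dpair z u = dpair z v) -> u = v.
Proof. by move=> h; apply/rowP => j; rewrite -!dpair_ebasl h. Qed.

Lemma TmapE (r : 'M[K]_n) (z : A) : Tmap r z = z *m r.
Proof. apply/rowP => j; rewrite !mxE; apply: eq_bigr => i _; by rewrite mulrC. Qed.

Lemma Tmap_lin (r : 'M[K]_n) : linear_map (Tmap r).
Proof. by move=> a x y; rewrite !TmapE mulmxDl scalemxAl. Qed.

Lemma Tmap_tau (r : 'M[K]_n) (z y : A) : dpair y (Tmap (tau r) z) = dpair z (Tmap r y).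
Proof.
rewrite !dpairE !TmapE /tau.
rewrite -[in RHS](trmxK (y *m r *m z^T)) [in RHS]mxE.
by rewrite !trmx_mul trmxK mulmxA.
Qed.

Lemma Tmap_add (r1 r2 : 'M[K]_n) (z : A) : Tmap (r1 + r2) z = Tmap r1 z + Tmap r2 z.
Proof. by rewrite !TmapE mulmxDr. Qed.


Section Bil.
Variable f : A -> A -> A.
Hypothesis Hf : bilinear_prod f.
Lemma blL z : linear_map (fun x => f x z).
Proof. by move=> a x y; rewrite Hf.1. Qed.
Lemma blR z : linear_map (f z).
Proof. by move=> a x y; rewrite Hf.2. Qed.
Lemma bDl x y z : f (x + y) z = f x z + f y z. Proof. exact: (lmD (blL z)). Qed.
Lemma bDr x y z : f z (x + y) = f z x + f z y. Proof. exact: (lmD (blR z)). Qed.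
Lemma bZl a x z : f (a *: x) z = a *: f x z. Proof. exact: (lmZ (blL z)). Qed.
Lemma bZr a x z : f z (a *: x) = a *: f z x. Proof. exact: (lmZ (blR z)). Qed.
Lemma bNl x z : f (- x) z = - f x z. Proof. exact: (lmN (blL z)). Qed.
Lemma bNr x z : f z (- x) = - f z x. Proof. exact: (lmN (blR z)). Qed.
Lemma b_suml (I : finType) (F : I -> A) z : f (\sum_i F i) z = \sum_i f (F i) z.
Proof. exact: (lm_sum (blL z)). Qed.
Lemma b_sumr (I : finType) (F : I -> A) z : f z (\sum_i F i) = \sum_i f z (F i).
Proof. exact: (lm_sum (blR z)). Qed.

Lemma dbl (I J : finType) (c : I -> K) (d : J -> K) (x : I -> A) (y : J -> A) w :
  \sum_p \sum_q c p * d q * dpair w (f (x p) (y q)) =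
  dpair w (f (\sum_p c p *: x p) (\sum_q d q *: y q)).
Proof.
rewrite b_suml (lf_sum (dpair_lin w)); apply: eq_bigr => p _.
rewrite bZl (lfZ (dpair_lin w)) b_sumr (lf_sum (dpair_lin w)) mulr_sumr.
apply: eq_bigr => q _; rewrite bZr (lfZ (dpair_lin w)); ring.
Qed.
End Bil.

Lemma lin_sum_dpair (g : A -> A) (Hg : linear_map g) (I : finType) (c : I -> K) (v : I -> A) w :
  \sum_p c p * dpair w (g (v p)) = dpair w (g (\sum_p c p *: v p)).
Proof.
rewrite (lm_sum Hg) (lf_sum (dpair_lin w)); apply: eq_bigr => p _.
by rewrite (lmZ Hg) (lfZ (dpair_lin w)).
Qed.

Lemma id_lin : linear_map (@id A). Proof. by []. Qed.

Lemma sum_pair (V : nmodType) (F : 'I_n -> 'I_n -> V) :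
  \sum_(p : 'I_n * 'I_n) F p.1 p.2 = \sum_i \sum_j F i j.
Proof. by rewrite pair_bigA. Qed.

Lemma sum_eb a (G : 'I_n -> K) : \sum_i (eb a) 0 i * G i = G a.
Proof.
rewrite (bigD1 a) //= big1 => [|i /negbTE hi]; rewrite !mxE ?eqxx ?hi ?mul1r ?addr0 //.
by rewrite andbF mul0r.
Qed.

Lemma sum_eb' a (G : 'I_n -> K) : \sum_i G i * (eb a) 0 i = G a.
Proof. by rewrite -[RHS](sum_eb a); apply: eq_bigr => i _; rewrite mulrC. Qed.

Lemma dpair_tl (s : 'M[K]_n) p z : dpair z (tl s p) = s p.1 p.2 * z 0 p.1.
Proof. by rewrite /tl (lfZ (dpair_lin z)) dpair_ebas. Qed.

Lemma TmapD1 (s : 'M[K]_n) z : Tmap s z = \sum_p dpair z (tl s p) *: tr K p.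
Proof.
under eq_bigr do rewrite dpair_tl /tr.
rewrite (sum_pair (fun a b => (s a b * z 0 a) *: eb b)) exchange_big /=.
rewrite {1}(row_sum_delta (Tmap s z)); apply: eq_bigr => k _.
by rewrite -scaler_suml !mxE; congr (_ *: _); apply: eq_bigr => i _; rewrite mulrC.
Qed.

Lemma TmapD2 (s : 'M[K]_n) z : Tmap (tau s) z = \sum_p dpair z (tr K p) *: tl s p.
Proof.
under eq_bigr do rewrite dpair_ebas /tl scalerA.
rewrite (sum_pair (fun a b => (z 0 b * s a b) *: eb a)) /=.
rewrite {1}(row_sum_delta (Tmap (tau s) z)); apply: eq_bigr => k _.
by rewrite -scaler_suml !mxE; congr (_ *: _); apply: eq_bigr => i _; rewrite !mxE mulrC.
Qed.


Definition mpair (M : 'M[K]_n) (z w : A) := \sum_i \sum_j z 0 i * M i j * w 0 j.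

Lemma mpairE M z w : mpair M z w = dpair z (\row_i dpair (row i M) w).
Proof.
rewrite /mpair /dpair; apply: eq_bigr => i _; rewrite !mxE mulr_sumr.
by apply: eq_bigr => j _; rewrite !mxE mulrA.
Qed.

Lemma mpair_eq0 M : (forall z w, mpair M z w = 0) -> M = 0.
Proof.
move=> h; apply/matrixP => i j; have := h (eb i) (eb j).
by rewrite mpairE dpair_ebasl mxE dpair_ebas mxE => ->; rewrite mxE.
Qed.

Lemma mpair_sum (I : finType) (F : I -> 'M[K]_n) z w :
  mpair (\sum_k F k) z w = \sum_k mpair (F k) z w.
Proof.
rewrite /mpair [RHS]exchange_big; apply: eq_bigr => i _ /=.
rewrite [RHS]exchange_big; apply: eq_bigr => j _ /=.
by rewrite summxE mulr_sumr mulr_suml.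
Qed.

Lemma mpairB M N z w : mpair (M - N) z w = mpair M z w - mpair N z w.
Proof.
rewrite /mpair -sumrB; apply: eq_bigr => i _; rewrite -sumrB; apply: eq_bigr => j _.
by rewrite !mxE; ring.
Qed.

Lemma mpair_tensor2 x y z w : mpair (tensor2 x y) z w = dpair z x * dpair w y.
Proof.
rewrite /mpair /dpair mulr_suml; apply: eq_bigr => i _; rewrite mulr_sumr.
by apply: eq_bigr => j _; rewrite !mxE; ring.
Qed.

Lemma mpair_tmap f g s z w :
  mpair (tmap f g s) z w = \sum_p dpair z (f (tl s p)) * dpair w (g (tr K p)).
Proof. by rewrite /tmap mpair_sum; apply: eq_bigr => p _; rewrite mpair_tensor2. Qed.

Lemma mpair_tmapL g (Hg : linear_map g) s z w :
  mpair (tmap id g s) z w = dpair w (g (Tmap s z)).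
Proof. by rewrite mpair_tmap TmapD1 -lin_sum_dpair. Qed.

Lemma mpair_tmapR f (Hf : linear_map f) s z w :
  mpair (tmap f id s) z w = dpair z (f (Tmap (tau s) w)).
Proof.
rewrite mpair_tmap TmapD2 -lin_sum_dpair //; apply: eq_bigr => p _; by rewrite mulrC.
Qed.

Definition tpair (F : {ffun 'I_n * 'I_n * 'I_n -> K}) (z w u : A) :=
  \sum_t F t * (z 0 t.1.1 * w 0 t.1.2 * u 0 t.2).

Lemma sum_triple (G : 'I_n * 'I_n * 'I_n -> K) :
  \sum_t G t = \sum_i \sum_j \sum_k G ((i, j), k).
Proof.
transitivity (\sum_(q : 'I_n * 'I_n) \sum_k G (q, k)).
  by rewrite pair_bigA; apply: eq_bigr => -[[i j] k].
rewrite -(sum_pair (fun i j => \sum_k G ((i, j), k))) /=.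
by apply: eq_bigr => -[i j].
Qed.

Lemma tpair_tensor3 x y v z w u : tpair (tensor3 x y v) z w u = dpair z x * dpair w y * dpair u v.
Proof.
rewrite /tpair sum_triple /dpair !mulr_suml; apply: eq_bigr => i _.
rewrite -mulrA mulr_suml mulr_sumr; apply: eq_bigr => j _; rewrite !mulr_sumr.
by apply: eq_bigr => k _; rewrite !ffunE /=; ring.
Qed.

Lemma tpair_sum (I : finType) (F : I -> {ffun 'I_n * 'I_n * 'I_n -> K}) z w u :
  tpair (\sum_k F k) z w u = \sum_k tpair (F k) z w u.
Proof.
rewrite /tpair [RHS]exchange_big; apply: eq_bigr => t _ /=.
by rewrite sum_ffunE mulr_suml.
Qed.

Lemma tpairD F G z w u : tpair (F + G) z w u = tpair F z w u + tpair G z w u.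
Proof. by rewrite /tpair -big_split; apply: eq_bigr => t _; rewrite ffunE mulrDl. Qed.

Lemma tpair_eq0 F : (forall z w u, tpair F z w u = 0) -> F = 0.
Proof.
move=> h; apply/ffunP => -[[i j] k]; have := h (eb i) (eb j) (eb k).
rewrite /tpair sum_triple.
under eq_bigr => i0 _ do under eq_bigr => j0 _ do under eq_bigr => k0 _ do rewrite /= mulrA mulrA.
under eq_bigr do under eq_bigr do rewrite sum_eb'.
under eq_bigr do rewrite sum_eb'.
by rewrite sum_eb' ffunE.
Qed.


Lemma dpair_sharp (om : A -> A -> K) (Hom : bilinear_form om) x y :
  dpair (sharp om x) y = om x y.
Proof.
have Hl : forall a u v, om x (a *: u + v) = a * om x u + om x v by move=> a u v; rewrite Hom.2.
rewrite {2}(row_sum_delta y) (lf_sum Hl) /dpair; apply: eq_bigr => j _.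
by rewrite (lfZ Hl) !mxE mulrC.
Qed.

Section Ops.
Variables succ prec : A -> A -> A.
Hypotheses (Hs : bilinear_prod succ) (Hp : bilinear_prod prec).
Local Notation circ := (circ succ prec).
Local Notation odot := (odot succ prec).
Local Notation star := (star succ prec).

Lemma circ_bil : bilinear_prod circ.
Proof.
split=> a x y z; rewrite /Defs.circ (Hs.1, Hs.2) (Hp.1, Hp.2) scalerDr; by rewrite addrACA.
Qed.
Lemma odot_bil : bilinear_prod odot.
Proof.
split=> a x y z; rewrite /Defs.odot (Hs.1, Hs.2) (Hp.1, Hp.2) scalerDr; by rewrite addrACA.
Qed.
Lemma star_lin x : linear_map (star x).
Proof.
move=> a u v; rewrite /Defs.star (bDr circ_bil) (bDl circ_bil) (bZr circ_bil) (bZl circ_bil).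
by rewrite [in RHS]scalerDr addrACA.
Qed.

Lemma tpair_YBE s z w u :
  tpair (\sum_p \sum_q
     (tensor3 (circ (tl s p) (tl s q)) (tr K p) (tr K q)
      + tensor3 (tl s q) (tl s p) (odot (tr K p) (tr K q))
      + tensor3 (tl s p) (prec (tr K p) (tl s q)) (tr K q))) z w u =
  dpair z (circ (Tmap (tau s) w) (Tmap (tau s) u)) + dpair u (odot (Tmap s w) (Tmap s z))
  + dpair w (prec (Tmap s z) (Tmap (tau s) u)).
Proof.
rewrite !TmapD2 !TmapD1 -(dbl circ_bil) -(dbl odot_bil) -(dbl Hp).
rewrite tpair_sum -!big_split /=; apply: eq_bigr => p _.
rewrite tpair_sum -!big_split /=; apply: eq_bigr => q _.
rewrite !tpairD !tpair_tensor3; ring.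
Qed.
End Ops.


Section Core.
Variables (succ prec circ star : A -> A -> A) (lam : K) (P Q : A -> A) (om : A -> A -> K).
Hypotheses (Hs : bilinear_prod succ) (Hp : bilinear_prod prec)
  (hcirc : forall x y, circ x y = succ x y + prec x y)
  (hstar : forall x y, star x y = circ x y + circ y x)
  (hQ : forall x, Q x = - (lam *: x) - P x)
  (HP : linear_map P) (Hom : bilinear_form om)
  (Hsym : forall x y, om x y = om y x)
  (Hnd : forall x, (forall y, om x y = 0) -> x = 0)
  (Hi1 : forall x y z, om (succ x y) z = om (star x z) y)
  (Hi2 : forall x y z, om (prec x y) z = - om x (circ z y))
  (Hc : forall x y, om (P x) y + om x (P y) + lam * om x y = 0).

Let Hl (x : A) : forall a u v, om x (a *: u + v) = a * om x u + om x v.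
Proof. by move=> a u v; rewrite Hom.2. Qed.
Let Hr (x : A) : forall a u v, om (a *: u + v) x = a * om u x + om v x.
Proof. by move=> a u v; rewrite Hom.1. Qed.
Lemma omDr x u v : om x (u + v) = om x u + om x v. Proof. exact: (lfD (Hl x) u v). Qed.
Lemma omZr x a u : om x (a *: u) = a * om x u. Proof. exact: (lfZ (Hl x) a u). Qed.
Lemma omNr x u : om x (- u) = - om x u. Proof. exact: (lfN (Hl x) u). Qed.
Lemma om0r x : om x 0 = 0. Proof. exact: lf0 (Hl x). Qed.
Lemma omDl x u v : om (u + v) x = om u x + om v x. Proof. exact: (lfD (Hr x) u v). Qed.
Lemma omZl x a u : om (a *: u) x = a * om u x. Proof. exact: (lfZ (Hr x) a u). Qed.
Lemma omNl x u : om (- u) x = - om u x. Proof. exact: (lfN (Hr x) u). Qed.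

Lemma Hcb : bilinear_prod circ.
Proof. split=> a x y z; rewrite !hcirc (Hs.1, Hs.2) (Hp.1, Hp.2) scalerDr; by rewrite addrACA. Qed.

Lemma adj x y : om (P x) y = om x (Q y).
Proof.
rewrite hQ omDr !omNr omZr; apply/eqP; rewrite -subr_eq0; apply/eqP.
by rewrite -(Hc x y); ring.
Qed.

Lemma core a b c :
  om c (circ (Q a) (Q b)) + om b (succ (P a) (P c) + prec (P c) (P a))
  + om a (prec (P c) (Q b)) =
  om c (circ (P a) (P b) - P (circ (P a) b + circ a (P b) + lam *: circ a b)).
Proof.
rewrite omDr (Hsym b (succ _ _)) Hi1 (Hsym (star _ _)) adj.
rewrite (Hsym b (prec _ _)) Hi2 adj (Hsym a (prec _ _)) Hi2 adj.
rewrite -!omNr -!omDr; congr (om c _).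
rewrite !hstar !hQ.
rewrite !(bDl Hcb, bDr Hcb, bNl Hcb, bNr Hcb, bZl Hcb, bZr Hcb, lmD HP, lmN HP, lmZ HP).
by apply/rowP => j; rewrite !mxE; ring.
Qed.

Hypothesis H : forall a b, circ (P a) (P b) = P (circ (P a) b + circ a (P b) + lam *: circ a b).

Lemma RB_succ x y : succ (P x) (P y) = P (succ (P x) y + succ x (P y) + lam *: succ x y).
Proof.
apply: subr0_eq; apply: Hnd => z.
rewrite omDl omNl adj Hi1 (Hsym (star _ _)) adj !omDl omZl !Hi1.
rewrite (Hsym (star _ _) (P y)) adj (Hsym (star _ _) y) (Hsym (star _ _) y).
have e : Q (star (P x) z) - (star (P x) (Q z) + Q (star x (Q z)) + lam *: star x (Q z)) =
   (circ (P x) (P z) - P (circ (P x) z + circ x (P z) + lam *: circ x z))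
 + (circ (P z) (P x) - P (circ (P z) x + circ z (P x) + lam *: circ z x)).
  rewrite !hstar !hQ.
  rewrite !(bDl Hcb, bDr Hcb, bNl Hcb, bNr Hcb, bZl Hcb, bZr Hcb, lmD HP, lmN HP, lmZ HP).
  by apply/rowP => j; rewrite !mxE; ring.
rewrite H H !subrr addr0 in e.
have := congr1 (om y) e; rewrite om0r omDr omNr !omDr omZr => h; rewrite -h; ring.
Qed.

Lemma RB_prec x y : prec (P x) (P y) = P (prec (P x) y + prec x (P y) + lam *: prec x y).
Proof.
apply: (@addrI _ (succ (P x) (P y))); rewrite -hcirc H RB_succ -(lmD HP).
congr P; rewrite !hcirc; by apply/rowP => j; rewrite !mxE; ring.
Qed.
End Core.

Lemma circ_RB (succ prec circ : A -> A -> A) lam P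
  (hcirc : forall x y, circ x y = succ x y + prec x y) (HP : linear_map P)
  (H1 : forall x y, succ (P x) (P y) = P (succ (P x) y + succ x (P y) + lam *: succ x y))
  (H2 : forall x y, prec (P x) (P y) = P (prec (P x) y + prec x (P y) + lam *: prec x y)) a b :
  circ (P a) (P b) = P (circ (P a) b + circ a (P b) + lam *: circ a b).
Proof.
rewrite hcirc H1 H2 -(lmD HP); congr P; rewrite !hcirc.
by apply/rowP => j; rewrite !mxE; ring.
Qed.


Lemma dpairC (x y : A) : dpair x y = dpair y x.
Proof. by rewrite /dpair; apply: eq_bigr => i _; rewrite mulrC. Qed.
Lemma dpairD (z x y : A) : dpair z (x + y) = dpair z x + dpair z y.
Proof. exact: (lfD (dpair_lin z)). Qed.
Lemma dpairZ (z : A) a (x : A) : dpair z (a *: x) = a * dpair z x.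
Proof. exact: (lfZ (dpair_lin z)). Qed.
Lemma dpairN (z x : A) : dpair z (- x) = - dpair z x.
Proof. exact: (lfN (dpair_lin z)). Qed.
Lemma dpair0 (z : A) : dpair z 0 = 0.
Proof. exact: (lf0 (dpair_lin z)). Qed.
Lemma dpair0l (z : A) : dpair 0 z = 0.
Proof. by rewrite dpairC dpair0. Qed.
Lemma mpair0 (z w : A) : mpair 0 z w = 0.
Proof. by rewrite /mpair big1 // => i _; rewrite big1 // => j _; rewrite mxE mulr0 mul0r. Qed.
Lemma tpair0 (z w u : A) : tpair 0 z w u = 0.
Proof. by rewrite /tpair big1 // => t _; rewrite ffunE mul0r. Qed.
Lemma tau_r (s : 'M[K]_n) : tau (s + tau s) = s + tau s.
Proof. by rewrite /tau linearD /= trmxK addrC. Qed.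

End Basic.

Lemma part_i (K : fieldType) (n : nat) (succ prec : 'rV[K]_n -> 'rV[K]_n -> 'rV[K]_n) :
  is_APN succ prec ->
   forall (s : 'M[K]_n) (lam : K),
     factorizable succ prec s -> lam != 0 ->
     forall omega : 'rV[K]_n -> 'rV[K]_n -> K,
       (forall zeta y, omega (Tmap (s + tau s) zeta) y = - lam * dpair zeta y) ->
       quadratic_RB_APN succ prec lam (fun x => Tmap s (sharp omega x)) omega.
Proof.
move=> HA s lam [HY [Hinv [g Rg gR]]] hl0 om hom.
have [Hs [Hp _]] := HA.
have omE x y : om x y = - lam * dpair (g x) y by rewrite -{1}(gR x) hom.
have glin : linear_map g.
  move=> a x y; rewrite -[in LHS](gR x) -[in LHS](gR y) -(Tmap_lin (s + tau s)).
  by rewrite Rg.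
have Hom : bilinear_form om.
  split=> a x y z; rewrite !omE ?glin.
    by rewrite dpair_linl; ring.
  by rewrite dpair_lin; ring.
have dpairR z w : dpair z (Tmap (s + tau s) w) = dpair w (Tmap (s + tau s) z).
  by rewrite !Tmap_add !dpairD !Tmap_tau addrC.
have Hsym x y : om x y = om y x.
  rewrite !omE; congr (_ * _); rewrite -{1}(gR y) -{2}(gR x); exact: dpairR.
have Hnd x : (forall y, om x y = 0) -> x = 0.
  move=> h; have gx0 : g x = 0.
    apply: dpair_inj => z; rewrite dpair0 dpairC.
    by move: (h z); rewrite omE => /eqP; rewrite mulf_eq0 oppr_eq0 (negbTE hl0) /= => /eqP.
  by rewrite -(gR x) gx0 (lm0 (Tmap_lin _)).
have shE x : sharp om x = - lam *: g x.
  by apply/rowP => j; rewrite !mxE omE dpair_ebas.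
pose P := fun x => Tmap s (sharp om x).
have PE x : P x = - lam *: Tmap s (g x) by rewrite /P shE (lmZ (Tmap_lin s)).
have Plin : linear_map P.
  by move=> a x y; rewrite !PE glin (Tmap_lin s) scalerDr !scalerA mulrC.
have TtE x : Tmap (tau s) (sharp om x) = - (lam *: x) - P x.
  have e : Tmap (s + tau s) (sharp om x) = - (lam *: x).
    by rewrite shE (lmZ (Tmap_lin (s + tau s))) gR scaleNr.
  by rewrite Tmap_add in e; rewrite -e /P [RHS]addrC addKr.
have Hc x y : om (P x) y + om x (P y) + lam * om x y = 0.
  have hxy : om x y = - lam * dpair (g x) (Tmap (s + tau s) (g y)) by rewrite gR omE.
  rewrite hxy (Hsym (P x) y) !omE !PE !dpairZ Tmap_add dpairD Tmap_tau; ring.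
have I1 x u v : om v (star succ prec x u) = om u (succ x v).
  have [h1 _] := Hinv x.
  have := f_equal (fun M => mpair M (g u) (g v)) h1.
  rewrite /= mpairB (mpair_tmapL (star_lin Hs Hp x)) (mpair_tmapR (blR Hs x)) tau_r !gR mpair0.
  by move/subr0_eq; rewrite !omE => ->.
have I2 x u v : om u (circ succ prec x v) = om v (odot succ prec x u).
  have [_ h2] := Hinv x.
  have := f_equal (fun M => mpair M (g u) (g v)) h2.
  rewrite /= mpairB (mpair_tmapL (blR (odot_bil Hs Hp) x)) (mpair_tmapR (blR (circ_bil Hs Hp) x)).
  rewrite tau_r !gR mpair0.
  by move/subr0_eq; rewrite !omE => ->.
have Hi1 x y z : om (succ x y) z = om (star succ prec x z) y.
  by rewrite (Hsym (succ x y)) -I1 Hsym.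
have Hi2 x y z : om (prec x y) z = - om x (circ succ prec z y).
  have e1 := I2 y x z; have e2 := I1 y z x.
  rewrite /odot (omDr Hom) -e2 /star (omDr Hom) in e1.
  move/eqP: e1; rewrite -subr_eq0 => /eqP e1.
  by rewrite Hsym -[RHS]subr0 -e1; ring.
pose Q := fun x => - (lam *: x) - P x.
have HRB a b : circ succ prec (P a) (P b) =
    P (circ succ prec (P a) b + circ succ prec a (P b) + lam *: circ succ prec a b).
  apply: subr0_eq; apply: Hnd => c; rewrite Hsym.
  rewrite -(@core K n succ prec (circ succ prec) (star succ prec) lam P Q om Hs Hp
     (fun _ _ => erefl) (fun _ _ => erefl) (fun _ => erefl) Plin Hom Hsym Hi1 Hi2 Hc).
  have := tpair_YBE Hs Hp s (sharp om c) (sharp om a) (sharp om b).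
  rewrite HY tpair0 !TtE !(dpair_sharp Hom) => e.
  exact: (esym e).
have Hsucc := @RB_succ K n succ prec (circ succ prec) (star succ prec) lam P Q om Hs Hp
     (fun _ _ => erefl) (fun _ _ => erefl) (fun _ => erefl) Plin Hom Hsym Hnd Hi1 Hc HRB.
have Hprec := @RB_prec K n succ prec (circ succ prec) (star succ prec) lam P Q om Hs Hp
     (fun _ _ => erefl) (fun _ _ => erefl) (fun _ => erefl) Plin Hom Hsym Hnd Hi1 Hc HRB.
by split=> //; split=> //; split.
Qed.

Lemma part_ii (K : fieldType) (n : nat) (succ prec : 'rV[K]_n -> 'rV[K]_n -> 'rV[K]_n)
   (lam : K) (P : 'rV[K]_n -> 'rV[K]_n) (om : 'rV[K]_n -> 'rV[K]_n -> K) :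
     lam != 0 -> quadratic_RB_APN succ prec lam P om ->
     forall s : 'M[K]_n,
       (forall x, Tmap s (sharp om x) = P x) ->
       factorizable succ prec s.
Proof.
move=> hl0 [HA [[Plin [Hprec Hsucc]] [Hom [Hsym [Hnd [Hi2 [Hi1 Hc]]]]]]] s hs.
have [Hs [Hp _]] := HA.
have dsh x y : dpair (sharp om x) y = om x y := dpair_sharp Hom x y.
pose W : 'M[K]_n := \matrix_(i, j) om (ebas K i) (ebas K j).
have shW x : sharp om x = x *m W.
  apply/rowP => j; rewrite !mxE.
  have Hr : forall a u v, om (a *: u + v) (ebas K j) = a * om u (ebas K j) + om v (ebas K j).
    by move=> a u v; rewrite Hom.1.
  rewrite {1}(row_sum_delta x) (lf_sum Hr); apply: eq_bigr => i _.
  by rewrite (lfZ Hr) mxE.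
have Wfree : row_free W.
  apply: inj_row_free => v hv; apply: Hnd => y.
  by rewrite -dsh shW hv dpair0l.
have Wu : W \in unitmx by rewrite -row_free_unit.
have surj z : sharp om (z *m invmx W) = z by rewrite shW mulmxKV.
pose Q := fun x => - (lam *: x) - P x.
have adj x y : om (P x) y = om x (Q y) := @adj K n lam P Q om (fun _ => erefl) Hom Hc x y.
have TtE x : Tmap (tau s) (sharp om x) = Q x.
  apply: dpair_inj => z; rewrite -(surj z) Tmap_tau hs !dsh.
  by rewrite -adj Hsym.
have RE x : Tmap (s + tau s) (sharp om x) = - lam *: x.
  by rewrite Tmap_add hs TtE /Q scaleNr addrC subrK.
split.
  apply: tpair_eq0 => z w u; rewrite -(surj z) -(surj w) -(surj u).
  rewrite (tpair_YBE Hs Hp) !TtE !hs !dsh /odot.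
  rewrite (@core K n succ prec (circ succ prec) (star succ prec) lam P Q om Hs Hp
     (fun _ _ => erefl) (fun _ _ => erefl) (fun _ => erefl) Plin Hom Hsym Hi1 Hi2 Hc).
  rewrite (@circ_RB K n succ prec (circ succ prec) lam P (fun _ _ => erefl) Plin Hsucc Hprec).
  by rewrite subrr (om0r Hom).
split.
  move=> x; split; apply: mpair_eq0 => z w; rewrite -(surj z) -(surj w).
    rewrite mpairB (mpair_tmapL (star_lin Hs Hp x)) (mpair_tmapR (blR Hs x)) tau_r !RE !dsh.
    rewrite (lmZ (star_lin Hs Hp x)) (bZr Hs) !(omZr Hom).
    by rewrite (Hsym _ (succ _ _)) Hi1 (Hsym _ (w *m invmx W)) subrr.
  rewrite mpairB (mpair_tmapR (blR (circ_bil Hs Hp) x)) (mpair_tmapL (blR (odot_bil Hs Hp) x)).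
  rewrite tau_r !RE !dsh (bZr (circ_bil Hs Hp)) (bZr (odot_bil Hs Hp)) !(omZr Hom).
  rewrite /odot (omDr Hom) (Hsym _ (succ _ _)) Hi1 (Hsym _ (prec _ _)) Hi2.
  rewrite (Hsym _ (z *m invmx W)) (omDr Hom); ring.
exists (fun y => sharp om (- lam^-1 *: y)).
  move=> z; rewrite -(surj z) RE scalerA mulrNN mulVf // scale1r.
  by [].
by move=> y; rewrite RE scalerA mulrNN divff // scale1r.
Qed.

Unset Implicit Arguments.
Theorem mainTheorem17 (K : fieldType) (n : nat)
    (succ prec : 'rV[K]_n -> 'rV[K]_n -> 'rV[K]_n) :
  (* (i) *)
  (is_APN succ prec ->
   forall (s : 'M[K]_n) (lam : K),
     factorizable succ prec s -> lam != 0 ->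
     forall omega : 'rV[K]_n -> 'rV[K]_n -> K,
       (* omega(x,y) = - lam < T_{s+tau s}^{-1} x, y > *)
       (forall zeta y, omega (Tmap (s + tau s) zeta) y = - lam * dpair zeta y) ->
       quadratic_RB_APN succ prec lam (fun x => Tmap s (sharp omega x)) omega)
  /\
  (* (ii) *)
  (forall (lam : K) (P : 'rV[K]_n -> 'rV[K]_n) (omega : 'rV[K]_n -> 'rV[K]_n -> K),
     lam != 0 -> quadratic_RB_APN succ prec lam P omega ->
     forall s : 'M[K]_n,
       (* T_s = P (omega^sharp)^{-1} *)
       (forall x, Tmap s (sharp omega x) = P x) ->
       factorizable succ prec s).
Proof.
split; [exact: part_i | exact: part_ii].
Qed.
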